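(* Let $n\geq 2$ and let $\mathcal{G}=(\mathcal{V},\mathcal{E})$ be a directed graph on $\mathcal{V}=\{1,\ldots,n\}$ in which every node has at least one outgoing edge, with hyperlink matrix $A$, let $m\in(0,1)$, let $x^*$ be the PageRank vector, and let $Q=(1-m)A$. Let $\mathcal{V}_1,\ldots,\mathcal{V}_N$ ($1\leq N\leq n$) be a partition of $\mathcal{V}$ into nonempty groups of consecutive indices, $\mathcal{V}_1=\{1,\ldots,l_1\}$, $\mathcal{V}_2=\{l_1+1,\ldots,l_1+l_2\}$, $\ldots$, $\mathcal{V}_N=\{n-l_N+1,\ldots,n\}$, and partition $Q$ into blocks $\check{Q}_{hg}\in\mathbb{R}^{l_h\times l_g}$ ($h,g=1,\ldots,N$) accordingly; likewise write the state vectors as $x(k)=(\check{x}_1(k)^T,\ldots,\check{x}_N(k)^T)^T$ and $z(k)=(\check{z}_1(k)^T,\ldots,\check{z}_N(k)^T)^T$ with $\check{x}_h(k),\check{z}_h(k)\in\mathbb{R}^{l_h}$. Let $\{\psi(k)\}_{k\geq 0}$ be a sequence in $\{1,\ldots,N\}$ in which every group index appears infinitely many times. Consider the algorithm with $\check{x}_h(0)=\check{z}_h(0)=\frac{m}{n}\mathbf{1}_{l_h}$ for all $h$, and for $k\geq 0$ and each $h$, $$\check{x}_h(k+1)=\check{x}_h(k)+\check{Q}_{h\psi(k)}\big(I-\check{Q}_{\psi(k)\psi(k)}\big)^{-1}\check{z}_{\psi(k)}(k),$$ $$\check{z}_h(k+1)=\begin{cases}0&\text{if } h=\psi(k),\\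 \check{z}_h(k)+\check{Q}_{h\psi(k)}\big(I-\check{Q}_{\psi(k)\psi(k)}\big)^{-1}\check{z}_{\psi(k)}(k)&\text{otherwise.}\end{cases}$$ Then $x(k)\to x^*$ as $k\to\infty$. If, in addition, there is $T>0$ such that every group index appears among $\psi(k),\ldots,\psi(k+T-1)$ for every $k\geq 0$, then the convergence is exponential, i.e., there exist $C>0$ and $\rho\in(0,1)$ with $\|x(k)-x^*\|\leq C\rho^k$ for all $k\geq 0$.
   Context: Write $(i,j)\in\mathcal{E}$ if page $i$ has a link to page $j$. $\mathcal{L}_j^{\text{out}}=\{i:(j,i)\in\mathcal{E}\}$ and $n_j=|\mathcal{L}_j^{\text{out}}|\geq 1$. The hyperlink matrix $A=(a_{ij})$ is defined by $a_{ij}=1/n_j$ if $i\in\mathcal{L}_j^{\text{out}}$ and $a_{ij}=0$ otherwise (column stochastic). The PageRank vector $x^*$ satisfies $x^*=(1-m)Ax^*+\frac{m}{n}\mathbf{1}_n$ and $\mathbf{1}_n^Tx^*=1$. Each diagonal block $\check{Q}_{hh}$ is a nonnegative principal submatrix of the Schur stable matrix $Q$, so $I-\check{Q}_{hh}$ is invertible. (Pages are assumed indexed so that groups are consecutive blocks.) *)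

(* Defs.v *)
From HB Require Import structures.
From mathcomp Require Import all_boot all_order all_algebra.
From mathcomp Require Import all_classical all_reals all_analysis.
Set Implicit Arguments. Unset Strict Implicit. Unset Printing Implicit Defensive.
Import Order.TTheory GRing.Theory Num.Theory.
Local Open Scope ring_scope.

(* Out-neighbours of page j: L_j^out = {i : (j,i) in E}; E j i means "j links to i". *)
Definition outdeg (n : nat) (E : rel 'I_n) (j : 'I_n) : nat := #|[set i | E j i]|.

Definition hyperlink (R : realType) (n : nat) (E : rel 'I_n) : 'M[R]_n :=
  \matrix_(i, j) (if E j i then (outdeg E j)%:R^-1 else 0).

Definition is_pagerank (R : realType) (n : nat) (E : rel 'I_n) (m : R)
    (x : 'cV[R]_n) : Prop :=
  x = (1 - m) *: (hyperlink R E *m x) + const_mx (m / n%:R)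
  /\ \sum_(i < n) x i 0 = 1.

Definition blk_update (R : realType) (N : nat) (l : 'I_N -> nat)
    (Q : 'M[R]_(\sum_(h < N) l h)) (z : 'cV[R]_(\sum_(h < N) l h))
    (g h : 'I_N) : 'cV[R]_(l h) :=
  submxblock Q h g *m invmx (1%:M - submxblock Q g g) *m submxcol z g.

(* Main.v *)
Set Warnings "-all".
Require Import Defs.
From HB Require Import structures.
From mathcomp Require Import all_boot all_order all_algebra.
From mathcomp Require Import all_classical all_reals all_analysis.
From mathcomp Require Import ring lra zify.
Import Order.TTheory GRing.Theory Num.Theory.
Import numFieldNormedType.Exports.
Local Open Scope ring_scope.
Section Blocks.
Import tagnat.
Variables (R : realType) (N : nat) (l : 'I_N -> nat).
Local Notation n := (\sum_(h < N) l h)%N.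

Lemma sum_blocks (F : 'I_n -> R) :
  \sum_i F i = \sum_(g < N) \sum_(k < l g) F (Rank g k).
Proof.
rewrite sig_big_dep /= (reindex (@rank _ l)) /=.
  by apply: eq_bigr => -[g k] _; rewrite rankE.
by exists sig => s _; rewrite ?sigK ?rankK.
Qed.

Lemma sum_block (F : 'I_n -> R) g :
  \sum_(i | sig1 i == g) F i = \sum_(k < l g) F (Rank g k).
Proof.
rewrite big_mkcond /= sum_blocks (bigD1 g) //= [X in _ + X]big1 ?addr0.
  by apply: eq_bigr => k _; rewrite Rank1K eqxx.
move=> h hg; apply: big1 => k _; by rewrite Rank1K (negbTE hg).
Qed.

Lemma L1zero p (P : 'M[R]_p) c (w : 'I_p -> R) :
  (forall i j, 0 <= P i j) -> (forall j, \sum_i P i j <= c) -> c < 1 ->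
  (forall i, 0 <= w i) -> (forall i, w i <= \sum_j P i j * w j) ->
  forall i, w i = 0.
Proof.
move=> P0 Pc c1 w0 wle.
have S : \sum_i w i <= c * \sum_i w i.
  apply: le_trans (ler_sum _ (fun i _ => wle i)) _.
  rewrite exchange_big /= mulr_sumr; apply: ler_sum => j _.
  by rewrite -mulr_suml ler_wpM2r.
have S1 : 0 <= \sum_i w i by apply: sumr_ge0.
have S0 : \sum_i w i = 0 by nra.
by move=> i; apply: (psumr_eq0P (fun i _ => w0 i) S0).
Qed.

Lemma unit_IB p (B : 'M[R]_p) c :
  (forall i j, 0 <= B i j) -> (forall j, \sum_i B i j <= c) -> c < 1 ->
  (1%:M - B) \in unitmx.
Proof.
move=> B0 Bc c1.
rewrite -unitmx_tr -row_free_unit -kermx_eq0; apply/eqP/row_matrixP => i.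
rewrite row0; set v := row i _.
have hv : v *m (1%:M - B)^T = 0 by apply/sub_kermxP; rewrite row_sub.
have ev : forall j, v 0 j = \sum_k B j k * v 0 k.
  move=> j; move/matrixP: hv => /(_ 0 j); rewrite linearB /= trmx1 mulmxBr mulmx1.
  rewrite !mxE => /eqP; rewrite subr_eq0 => /eqP ->.
  by apply: eq_bigr => k _; rewrite !mxE mulrC.
have := @L1zero p B c (fun j => `|v 0 j|) B0 Bc c1 (fun j => normr_ge0 _).
move=> H; apply/rowP => j; rewrite [RHS]mxE.
apply: normr0_eq0; apply: H => {}j.
rewrite {1}ev; apply: le_trans (ler_norm_sum _ _ _) _.
by apply: ler_sum => k _; rewrite normrM ger0_norm.
Qed.

Lemma sum_block_le (F : 'I_n -> R) g :
  (forall i, 0 <= F i) -> \sum_(k < l g) F (Rank g k) <= \sum_i F i.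
Proof.
move=> F0; rewrite -sum_block [leRHS](bigID (fun i => sig1 i == g)) /=.
by rewrite lerDl sumr_ge0.
Qed.

Variables (Q : 'M[R]_n) (c : R).
Hypothesis Q0 : forall i j, 0 <= Q i j.
Hypothesis Qc : forall j, \sum_i Q i j <= c.
Hypothesis c1 : c < 1.

Definition uvec (z : 'cV[R]_n) g := invmx (1%:M - submxblock Q g g) *m submxcol z g.
Definition QU (z : 'cV[R]_n) g : 'cV[R]_n :=
  \col_i \sum_(k < l g) Q i (Rank g k) * uvec z g k 0.

Lemma unit_g g : (1%:M - submxblock Q g g) \in unitmx.
Proof.
apply: (@unit_IB _ _ c) => //; first by move=> i j; rewrite mxE.
move=> j; apply: le_trans (Qc (Rank g j)).
under eq_bigr do rewrite mxE.
by apply: (sum_block_le (fun i => Q i (Rank g j))).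
Qed.

Lemma uvec_eq z g k :
  uvec z g k 0 = z (Rank g k) 0 + \sum_k' Q (Rank g k) (Rank g k') * uvec z g k' 0.
Proof.
have : (1%:M - submxblock Q g g) *m uvec z g = submxcol z g.
  by rewrite /uvec mulKVmx // unit_g.
move: (uvec z g) => u.
rewrite mulmxBl mul1mx => /matrixP /(_ k 0).
rewrite !mxE => <-.
rewrite [X in _ - X](eq_bigr (fun j => Q (Rank g k) (Rank g j) * u j 0)) ?subrK //.
by move=> j _; rewrite mxE.
Qed.


Lemma colsum_g g (j : 'I_(l g)) : \sum_(k < l g) Q (Rank g k) (Rank g j) <= c.
Proof.
apply: le_trans (Qc (Rank g j)).
by apply: (sum_block_le (fun i => Q i (Rank g j))).
Qed.

Lemma uvec_ge0 (z : 'cV[R]_n) g : (forall i, 0 <= z i 0) -> forall k, 0 <= uvec z g k 0.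
Proof.
move=> z0.
pose P : 'M[R]_(l g) := \matrix_(k, k') Q (Rank g k) (Rank g k').
pose w k := Num.max 0 (- uvec z g k 0).
have P0 : forall i j, 0 <= P i j by move=> i j; rewrite mxE.
have Pc : forall j, \sum_i P i j <= c.
  by move=> j; under eq_bigr do rewrite mxE; apply: colsum_g.
have w0 : forall i, 0 <= w i by move=> i; rewrite le_max lexx.
have wle : forall i, w i <= \sum_j P i j * w j.
  move=> k; rewrite ge_max; apply/andP; split.
    by apply: sumr_ge0 => j _; apply: mulr_ge0.
  rewrite uvec_eq opprD; apply: le_trans (_ : - \sum_k' Q (Rank g k) (Rank g k') * uvec z g k' 0 <= _).
    by have := z0 (Rank g k); lra.
  rewrite -sumrN; apply: ler_sum => j _; rewrite [P _ _]mxE -mulrN; apply: ler_wpM2l => //.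
  by rewrite le_max lexx orbT.
move=> k; have := @L1zero _ P c w P0 Pc c1 w0 wle k.
rewrite /w => /eqP; rewrite eq_le ge_max => /andP[/andP[_ H] _].
by rewrite -oppr_le0.
Qed.

Lemma uvec_ge (z : 'cV[R]_n) g : (forall i, 0 <= z i 0) ->
  forall k, z (Rank g k) 0 <= uvec z g k 0.
Proof.
move=> z0 k; rewrite uvec_eq lerDl; apply: sumr_ge0 => j _.
by apply: mulr_ge0 => //; apply: uvec_ge0.
Qed.

Lemma QU_ge0 (z : 'cV[R]_n) g : (forall i, 0 <= z i 0) -> forall i, 0 <= QU z g i 0.
Proof.
move=> z0 i; rewrite mxE; apply: sumr_ge0 => j _.
by apply: mulr_ge0 => //; apply: uvec_ge0.
Qed.

Definition znext (z : 'cV[R]_n) g : 'cV[R]_n :=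
  \col_i (if sig1 i == g then 0 else z i 0 + QU z g i 0).

Lemma znext_sum (z : 'cV[R]_n) g : (forall i, 0 <= z i 0) ->
  \sum_i znext z g i 0 <= \sum_i z i 0 - (1 - c) * \sum_(i | sig1 i == g) z i 0.
Proof.
move=> z0.
have E1 : \sum_i znext z g i 0 =
   \sum_i (z i 0 + QU z g i 0) - \sum_(i | sig1 i == g) (z i 0 + QU z g i 0).
  rewrite [X in _ = X - _](bigID (fun i => sig1 i == g)) /= addrC addrK.
  rewrite [RHS]big_mkcond /=; apply: eq_bigr => i _; rewrite mxE; by case: ifP.
have E2 : \sum_(i | sig1 i == g) (z i 0 + QU z g i 0) = \sum_k uvec z g k 0.
  rewrite sum_block; apply: eq_bigr => k _; rewrite uvec_eq mxE.
  by [].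
have E3 : \sum_i QU z g i 0 <= c * \sum_k uvec z g k 0.
  under eq_bigr do rewrite mxE.
  rewrite exchange_big /= mulr_sumr; apply: ler_sum => k _.
  by rewrite -mulr_suml ler_wpM2r ?uvec_ge0.
have E4 : \sum_(i | sig1 i == g) z i 0 <= \sum_k uvec z g k 0.
  by rewrite sum_block; apply: ler_sum => k _; apply: uvec_ge.
rewrite E1 E2 big_split /=.
have : 0 <= 1 - c by rewrite subr_ge0 ltW.
nra.
Qed.

Lemma QU_mul (z : 'cV[R]_n) g :
  Q *m (\col_i (if sig1 i == g then z i 0 + QU z g i 0 else 0)) = QU z g.
Proof.
apply/matrixP => i j; rewrite !ord1 !mxE.
rewrite (eq_bigr (fun j => if sig1 j == g then Q i j * (z j 0 + QU z g j 0) else 0)).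
  rewrite -big_mkcond /= sum_block; apply: eq_bigr => k _.
  by rewrite uvec_eq [QU _ _ _ _]mxE.
by move=> j' _; rewrite mxE; case: ifP => _; rewrite ?mulr0.
Qed.


Lemma blk_uvec (z : 'cV[R]_n) g h : blk_update Q z g h = submxblock Q h g *m uvec z g.
Proof. by rewrite /blk_update /uvec mulmxA. Qed.

Lemma x_entry (y z : 'cV[R]_n) g i :
  (\mxcol_h (submxcol y h + blk_update Q z g h)) i 0 = y i 0 + QU z g i 0.
Proof.
rewrite mxE blk_uvec mxE mxE sig2K; congr (_ + _).
rewrite mxE [QU _ _ _ _]mxE.
by apply: eq_bigr => k _; rewrite [submxblock _ _ _ _ _]mxE sig2K.
Qed.

Lemma z_entry (z : 'cV[R]_n) g i :
  (\mxcol_h (if h == g then 0 else submxcol z h + blk_update Q z g h)) i 0 =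
  znext z g i 0.
Proof.
rewrite mxE [znext _ _ _ _]mxE; case: eqP => _; first by rewrite mxE.
rewrite blk_uvec mxE mxE sig2K; congr (_ + _).
rewrite mxE [QU _ _ _ _]mxE.
by apply: eq_bigr => k _; rewrite [submxblock _ _ _ _ _]mxE sig2K.
Qed.


Hypothesis c0 : 0 <= c.

Lemma znext_eq (w : 'cV[R]_n) g : znext w g =
  w + QU w g - \col_i (if sig1 i == g then w i 0 + QU w g i 0 else 0).
Proof.
apply/matrixP => i j; rewrite [j]ord1 !mxE; case: ifP => _.
  by rewrite subrr.
by rewrite subr0.
Qed.

Section Process.
Variables (psi : nat -> 'I_N) (z : nat -> 'cV[R]_n).
Hypothesis hz : forall k, z k.+1 = znext (z k) (psi k).
Hypothesis z00 : forall i, 0 <= z 0%N i 0.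

Lemma z_ge0 k i : 0 <= z k i 0.
Proof.
elim: k i => [|k IH] i //; rewrite hz mxE; case: ifP => _ //.
by rewrite addr_ge0 ?QU_ge0.
Qed.

Definition S k := \sum_i z k i 0.

Lemma S_ge0 k : 0 <= S k.
Proof. by apply: sumr_ge0 => i _; apply: z_ge0. Qed.

Lemma S_step k : S k.+1 <= S k - (1 - c) * \sum_(i | sig1 i == psi k) z k i 0.
Proof. by rewrite /S hz; apply: znext_sum; apply: z_ge0. Qed.

Lemma S_dec k : S k.+1 <= S k.
Proof.
apply: le_trans (S_step k) _; rewrite lerBlDr lerDl mulr_ge0 //.
  by rewrite subr_ge0 ltW.
by apply: sumr_ge0 => i _; apply: z_ge0.
Qed.

Lemma S_mono k k' : (k <= k')%N -> S k' <= S k.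
Proof.
move=> /subnK <-; elim: (k' - k)%N => [|d IH] //=.
by rewrite addSn; apply: le_trans (S_dec _) IH.
Qed.

Lemma window_aux K d :
  (forall i, ~~ has (fun j => psi j == sig1 i) (iota K d) -> z K i 0 <= z (K + d) i 0) /\
  S (K + d) <= S K - (1 - c) *
     \sum_(i | has (fun j => psi j == sig1 i) (iota K d)) z K i 0.
Proof.
have c1' : 0 <= 1 - c by rewrite subr_ge0 ltW.
elim: d => [|d [IH1 IH2]].
  split; first by move=> i _; rewrite [(K + 0)%N]addn0.
  have -> : \sum_(i | has (fun j => psi j == sig1 i) (iota K 0)) z K i 0 = 0.
    by apply: big_pred0.
  by rewrite mulr0 subr0 [(K + 0)%N]addn0.
pose P := fun i : 'I_n => has (fun j => psi j == sig1 i) (iota K d).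
have PS : forall i, has (fun j => psi j == sig1 i) (iota K d.+1) =
     P i || (psi (K + d) == sig1 i).
  by move=> i; rewrite -addn1 iotaD has_cat /= orbF.
have zs : forall i, sig1 i != psi (K + d) -> z (K + d) i 0 <= z (K + d.+1) i 0.
  move=> i ne; rewrite addnS hz mxE (negbTE ne) lerDl QU_ge0 //.
  by move=> j; apply: z_ge0.
split.
  move=> i; rewrite PS negb_or => /andP[nP ne].
  by apply: le_trans (IH1 i nP) (zs i _); rewrite eq_sym.
rewrite addnS; apply: le_trans (S_step _) _.
set g := psi (K + d).
have Pg : forall i, sig1 i == g -> P i = has (fun j => psi j == g) (iota K d).
  by move=> i /eqP e; rewrite /P e.
have S0 : 0 <= \sum_(i | sig1 i == g) z (K + d) i 0.
  by apply: sumr_ge0 => i _; apply: z_ge0.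
case hg : (has (fun j => psi j == g) (iota K d)).
  have -> : \sum_(i | has (fun j => psi j == sig1 i) (iota K d.+1)) z K i 0 =
            \sum_(i | P i) z K i 0.
    apply: eq_bigl => i; rewrite PS; case Pi: (P i) => //=.
    apply/negbTE/eqP => e; have := Pg i; rewrite -e eqxx hg Pi.
    by move=> /(_ isT).
  have : 0 <= (1 - c) * \sum_(i | sig1 i == g) z (K + d) i 0 by apply: mulr_ge0.
  lra.
have -> : \sum_(i | has (fun j => psi j == sig1 i) (iota K d.+1)) z K i 0 =
          \sum_(i | P i) z K i 0 + \sum_(i | sig1 i == g) z K i 0.
  rewrite (bigID P); congr (_ + _); apply: eq_bigl => i; rewrite PS.
    by case: (P i) => /=; rewrite ?andbT ?andbF.
  case e : (sig1 i == g).
    by rewrite (Pg i e) hg eq_sym e.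
  by rewrite eq_sym e; case: (P i).
have : \sum_(i | sig1 i == g) z K i 0 <= \sum_(i | sig1 i == g) z (K + d) i 0.
  by apply: ler_sum => i e; apply: IH1; have := Pg i e; rewrite /P => ->; rewrite hg.
move=> /(ler_wpM2l c1') H; move: IH2; rewrite -/(P _); lra.
Qed.

Lemma window K d : (forall h, has (fun j => psi j == h) (iota K d)) ->
  S (K + d) <= c * S K.
Proof.
move=> all; have [_ H] := window_aux K d.
have E : \sum_(i | has (fun j => psi j == sig1 i) (iota K d)) z K i 0 = S K.
  by apply: eq_bigl => i; rewrite all.
rewrite E in H; lra.
Qed.

Lemma S_geom_from :
  (forall K, exists K', S K' <= c * S K) ->
  forall p, exists K, S K <= c ^+ p * S 0.
Proof.
move=> hf; elim=> [|p [K HK]]; first by exists 0%N; rewrite expr0 mul1r.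
have [K' H] := hf K; exists K'; apply: le_trans H _.
by rewrite exprS -mulrA ler_wpM2l.
Qed.

Section Inf.
Hypothesis hinf : forall h (K : nat), exists k : nat, (K <= k)%N /\ psi k = h.

Lemma cover K : exists d, forall h, has (fun j => psi j == h) (iota K d).
Proof.
suff: forall s : seq 'I_N, exists d, forall h, h \in s -> has (fun j => psi j == h) (iota K d).
  by move=> /(_ (enum 'I_N)) [d Hd]; exists d => h; apply: Hd; rewrite mem_enum.
elim=> [|h s [d IH]]; first by exists 0%N.
have [k [Kk pk]] := hinf h K.
exists (maxn d (k - K).+1) => h'; rewrite inE => /orP[/eqP ->|hs].
  apply/hasP; exists k; last by rewrite pk eqxx.
  rewrite mem_iota; lia.
have /hasP [j jin pj] := IH h' hs; apply/hasP; exists j => //.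
move: jin; rewrite !mem_iota; lia.
Qed.

Lemma S_geom p : exists K, S K <= c ^+ p * S 0.
Proof.
apply: S_geom_from => K; have [d Hd] := cover K; exists (K + d)%N.
exact: window.
Qed.
End Inf.

Lemma S_periodic T : (0 < T)%N ->
  (forall (k : nat) (h : 'I_N), exists j : nat, (k <= j < k + T)%N /\ psi j = h) ->
  forall k, S k <= c ^+ (k %/ T) * S 0.
Proof.
move=> T0 hT.
have P : forall p, S (p * T) <= c ^+ p * S 0.
  elim=> [|p IH]; first by rewrite mul0n expr0 mul1r.
  rewrite mulSn [(T + _)%N]addnC; apply: le_trans (@window (p * T)%N T _) _.
    move=> h; have [j [jin pj]] := hT (p * T)%N h.
    by apply/hasP; exists j; rewrite ?mem_iota ?pj.
  by rewrite exprS -mulrA ler_wpM2l.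
by move=> k; apply: le_trans (P _); apply: S_mono; rewrite leq_trunc_div.
Qed.

Variables (x : nat -> 'cV[R]_n) (xstar : 'cV[R]_n).
Hypothesis hx : forall k, x k.+1 = x k + QU (z k) (psi k).
Hypothesis inv0 : (1%:M - Q) *m (xstar - x 0%N) = Q *m z 0%N.

Lemma inv k : (1%:M - Q) *m (xstar - x k) = Q *m z k.
Proof.
elim: k => // k IH; rewrite hx hz znext_eq.
rewrite opprD addrA mulmxBr IH mulmxBr mulmxDr QU_mul mulmxBl mul1mx.
by rewrite opprB addrA.
Qed.

Lemma err k i : `|(x k - xstar) i 0| * (1 - c) <= c * S k.
Proof.
rewrite -opprB mxE normrN.
have := inv k; move: (xstar - x k) => ev e.
have E : forall j, ev j 0 = \sum_q Q j q * (ev q 0 + z k q 0).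
  move=> j; move/matrixP: e => /(_ j 0); rewrite mulmxBl mul1mx !mxE.
  move=> /eqP; rewrite subr_eq => /eqP ->; rewrite addrC -big_split /=.
  by apply: eq_bigr => q _; rewrite mulrDr.
set A := \sum_j `|ev j 0|.
have HA : A <= c * (A + S k).
  rewrite /A /S -big_split mulr_sumr.
  apply: le_trans (_ : \sum_j \sum_q Q j q * (`|ev q 0| + z k q 0) <= _).
    apply: ler_sum => j _; rewrite E; apply: le_trans (ler_norm_sum _ _ _) _.
    apply: ler_sum => q _; rewrite normrM ger0_norm // ler_wpM2l //.
    by apply: le_trans (ler_normD _ _) _; rewrite (ger0_norm (z_ge0 _ _)).
  rewrite exchange_big /=; apply: ler_sum => q _.
  rewrite -mulr_suml ler_wpM2r //.
  by rewrite addr_ge0 // z_ge0.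
have Hi : `|ev i 0| <= A.
  by rewrite /A (bigD1 i) //= lerDl sumr_ge0.
have c1' : 0 <= 1 - c by rewrite subr_ge0 ltW.
have := ler_wpM2r c1' Hi; nra.
Qed.

End Process.

End Blocks.

Lemma bern (R : realFieldType) (a : R) (T : nat) :
  0 <= a -> a <= 1 -> 1 - T%:R * a <= (1 - a) ^+ T.
Proof.
move=> a0 a1; elim: T => [|T IH]; first by rewrite expr0 mul0r subr0.
rewrite exprS -natr1.
have h1 : 0 <= 1 - a by lra.
have := ler_wpM2l h1 IH.
have : 0 <= T%:R * a * a by rewrite !mulr_ge0.
nra.
Qed.

Lemma mxnorm_le (R : realType) p (M : 'cV[R]_p) r :
  0 <= r -> (forall i, `|M i 0| <= r) -> `|M| <= r.
Proof.
move=> r0 H; change (mx_norm M <= r); rewrite mx_normrE.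
by apply: bigmax_le => // -[i j] _; rewrite [j]ord1; exact: H.
Qed.

Local Open Scope classical_set_scope.
Local Open Scope ring_scope.

Theorem proposition2 (R : realType) (N : nat) (l : 'I_N -> nat)
    (E : rel 'I_(\sum_(h < N) l h)) (m : R)
    (xstar : 'cV[R]_(\sum_(h < N) l h))
    (psi : nat -> 'I_N)
    (x z : nat -> 'cV[R]_(\sum_(h < N) l h)) :
  (2 <= \sum_(h < N) l h)%N ->
  (forall h, (0 < l h)%N) ->
  (forall j, (0 < outdeg E j)%N) ->
  0 < m < 1 ->
  is_pagerank E m xstar ->
  (forall h (K : nat), exists k : nat, (K <= k)%N /\ psi k = h) ->
  x 0%N = const_mx (m / (\sum_(h < N) l h)%:R) ->
  z 0%N = const_mx (m / (\sum_(h < N) l h)%:R) ->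
  (forall k : nat,
     x k.+1 = \mxcol_h (submxcol (x k) h
                + blk_update ((1 - m) *: hyperlink R E) (z k) (psi k) h)) ->
  (forall k : nat,
     z k.+1 = \mxcol_h (if h == psi k then 0
                else submxcol (z k) h
                     + blk_update ((1 - m) *: hyperlink R E) (z k) (psi k) h)) ->
  (x @ \oo --> xstar) /\
  ((exists T : nat, (0 < T)%N /\
      forall (k : nat) (h : 'I_N), exists j : nat, (k <= j < k + T)%N /\ psi j = h) ->
   exists C rho : R, 0 < C /\ 0 < rho < 1 /\
     forall k : nat, `|x k - xstar| <= C * rho ^+ k).
Proof.
move=> n2 lpos outpos /andP[m0 m1] [hstar hsum] hinf hx0 hz0 hx hz.
set Q := (1 - m) *: hyperlink R E.
have Q0 : forall i j, 0 <= Q i j.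
  move=> i j; rewrite !mxE; apply: mulr_ge0; first lra.
  by case: ifP => _ //; rewrite invr_ge0 ler0n.
have Qc : forall j, \sum_i Q i j <= 1 - m.
  move=> j; under eq_bigr do rewrite !mxE.
  rewrite -mulr_sumr.
  suff -> : \sum_i (if E j i then (outdeg E j)%:R^-1 else 0) = 1 :> R by rewrite mulr1.
  rewrite -big_mkcond /= sumr_const.
  have -> : #|E j| = outdeg E j by apply: eq_card => i; rewrite inE.
  by rewrite -(mulr_natr ((outdeg E j)%:R^-1)) mulVf // pnatr_eq0 -lt0n outpos.
have c1 : 1 - m < 1 by lra.
have c0 : 0 <= 1 - m by lra.
have hz' : forall k, z k.+1 = znext R N l Q (z k) (psi k).
  by move=> k; rewrite hz; apply/matrixP => i j; rewrite [j]ord1 z_entry.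
have hx' : forall k, x k.+1 = x k + QU R N l Q (z k) (psi k).
  by move=> k; rewrite hx; apply/matrixP => i j; rewrite [j]ord1 x_entry [RHS]mxE.
have z00 : forall i, 0 <= z 0%N i 0.
  by move=> i; rewrite hz0 mxE divr_ge0 ?ler0n // ltW.
have inv0 : (1%:M - Q) *m (xstar - x 0%N) = Q *m z 0%N.
  rewrite hx0 -hz0.
  have hs : xstar - Q *m xstar = z 0%N.
    by rewrite {1}hstar hz0 -scalemxAl addrAC subrr add0r.
  by rewrite mulmxBr mulmxBl mul1mx hs mulmxBl mul1mx opprB addrC subrK.
pose Sk := S R N l z.
have Sge0 : forall k, 0 <= Sk k := @S_ge0 R N l Q (1 - m) Q0 Qc c1 psi z hz' z00.
have errk : forall k, `|x k - xstar| <= (1 - m) / m * Sk k.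
  move=> k; apply: mxnorm_le.
    by apply: mulr_ge0 => //; apply: divr_ge0 => //; apply: ltW.
  move=> i; rewrite mulrAC ler_pdivlMr //.
  have := @err R N l Q (1 - m) Q0 Qc c1 psi z hz' z00 x xstar hx' inv0 k i.
  by have -> : 1 - (1 - m) = m by lra.
set M0 := (1 - m) / m * Sk 0%N.
have M00 : 0 <= M0 by apply: mulr_ge0 => //; apply: divr_ge0 => //; apply: ltW.
have mpos : 0 <= (1 - m) / m by apply: divr_ge0 => //; apply: ltW.
split.
  apply/cvgrPdist_le => eps eps0.
  have n1 : `|1 - m| < 1 by rewrite ger0_norm.
  have e1 : 0 < eps / (M0 + 1) by apply: divr_gt0 => //; lra.
  have /cvgrPdist_le /(_ _ e1) [p0 _ Hp] := cvg_expr n1.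
  have := Hp p0 (leqnn p0); rewrite sub0r normrN ger0_norm ?exprn_ge0 // => Hc.
  have [K HK] := @S_geom R N l Q (1 - m) Q0 Qc c1 c0 psi z hz' z00 hinf p0.
  exists K => // k /= Kk; rewrite distrC; apply: le_trans (errk k) _.
  have A1 : (1 - m) / m * Sk k <= (1 - m) / m * ((1 - m) ^+ p0 * Sk 0%N).
    apply: ler_wpM2l => //; apply: le_trans HK.
    exact: (@S_mono R N l Q (1 - m) Q0 Qc c1 psi z hz' z00 K k Kk).
  have A2 : (1 - m) / m * ((1 - m) ^+ p0 * Sk 0%N) = (1 - m) ^+ p0 * M0.
    by rewrite mulrCA.
  have A3 : (1 - m) ^+ p0 * M0 <= eps / (M0 + 1) * M0 by apply: ler_wpM2r.
  have A4 : eps / (M0 + 1) * M0 <= eps.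
    rewrite mulrAC ler_pdivrMr; last lra.
    by apply: ler_wpM2l; [exact: ltW | rewrite lerDl].
  lra.
move=> [T [T0 hT]].
have T0' : (0 : R) < T%:R by rewrite ltr0n.
set a := m / T%:R.
have a0 : 0 < a by apply: divr_gt0.
have a1 : a <= m.
  rewrite /a ler_pdivrMr // -{1}(mulr1 m); apply: ler_wpM2l; first exact: ltW.
  by rewrite ler1n.
set rho := 1 - a.
have rho0 : 0 < rho by rewrite /rho; lra.
have rho1 : rho < 1 by rewrite /rho; lra.
have hb : 1 - m <= rho ^+ T.
  have := @bern R a T (ltW a0) (ltW (le_lt_trans a1 m1)).
  by rewrite /a mulrC divfK // gt_eqF.
have rT0 : 0 < rho ^+ T by apply: exprn_gt0.
exists ((M0 + 1) / rho ^+ T), rho; split.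
  by apply: divr_gt0 => //; lra.
split; first by rewrite rho0 rho1.
move=> k; set p := (k %/ T)%N.
have Skp := @S_periodic R N l Q (1 - m) Q0 Qc c1 c0 psi z hz' z00 T T0 hT k.
have E1 : `|x k - xstar| <= (1 - m) ^+ p * M0.
  apply: le_trans (errk k) _; rewrite /M0 mulrCA; exact: ler_wpM2l.
have E2 : (1 - m) ^+ p <= rho ^+ (T * p).
  rewrite exprM; apply: lerXn2r => //; rewrite nnegrE //; exact: ltW.
have E3 : rho ^+ (T * p) * rho ^+ T <= rho ^+ k.
  rewrite -exprD; apply: ler_wiXn2l; [exact: ltW | exact: ltW |].
  have := ltn_ceil k T0; rewrite -/p mulSn [(p * T)%N]mulnC [(T + _)%N]addnC.
  exact: ltnW.
rewrite mulrAC ler_pdivlMr //.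
have cp0 : 0 <= (1 - m) ^+ p by apply: exprn_ge0.
have rTp0 : 0 <= rho ^+ (T * p) by apply: exprn_ge0; exact: ltW.
have rk0 : 0 <= rho ^+ k by apply: exprn_ge0; exact: ltW.
apply: le_trans (ler_wpM2r (ltW rT0) E1) _.
apply: le_trans (_ : (M0 + 1) * (rho ^+ (T * p) * rho ^+ T) <= _); last first.
  by apply: ler_wpM2l => //; lra.
rewrite mulrA; apply: ler_wpM2r; first exact: ltW.
apply: le_trans (_ : (M0 + 1) * (1 - m) ^+ p <= _); last by apply: ler_wpM2l => //; lra.
by rewrite mulrC; apply: ler_wpM2r => //; lra.
Qed.
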